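(* Let $n\ge 2$ and let $P$ be a partial $n$-Metric on a set $X$. Then for all $(x_1,\dots,x_n)\in X^n$, $(y_1,\dots,y_n)\in X^n$ and every $t\in\{1,\dots,n\}$, $$P(x_1,\dots,x_n)\le P(y_1,\dots,y_t,x_{t+1},\dots,x_n)+\sum_{j=1}^t\big[P(\langle y_j\rangle^{n-1},x_j)-P(\langle y_j\rangle^n)\big].$$
   Context: Notation: $\langle a\rangle^k$ denotes the $k$-tuple $(a,a,\dots,a)$, inserted into the argument list of a function. A partial $n$-Metric on $X$ is a function $P:X^n\to\mathbb{R}$ such that for all $x_1,\dots,x_n,a\in X$: (1) $P(\langle x_1\rangle^n)\le P(\langle x_1\rangle^{n-1},x_2)$; (2) $P(x_1,\dots,x_n)=P(x_{\pi(1)},\dots,x_{\pi(n)})$ for every permutation $\pi$ of $\{1,\dots,n\}$; (3) $P(\langle x_1\rangle^{n-1},x_2)=P(\langle x_1\rangle^n)$ and $P(\langle x_2\rangle^{n-1},x_1)=P(\langle x_2\rangle^n)$ if and only if $x_1=x_2$; (4) $P(x_1,\dots,x_n)\le P(x_1,\dots,x_{n-1},a)+P(\langle a\rangle^{n-1},x_n)-P(\langle a\rangle^n)$. *)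

(* Defs.v *)
From HB Require Import structures.
From mathcomp Require Import all_boot all_order all_algebra all_fingroup.
From mathcomp Require Import reals.
Set Implicit Arguments. Unset Strict Implicit. Unset Printing Implicit Defensive.
Import Order.TTheory GRing.Theory Num.Theory.
Local Open Scope ring_scope.

(* Points of X^n are finite functions 'I_n -> X; coordinate x_k is x (k-1). *)

Definition cst_tup (X : Type) (n : nat) (a : X) : {ffun 'I_n -> X} :=
  [ffun _ => a].

Definition cl_tup (X : Type) (n : nat) (a b : X) : {ffun 'I_n -> X} :=
  [ffun i : 'I_n => if val i == n.-1 then b else a].

Definition setlast (X : Type) (n : nat) (x : {ffun 'I_n -> X}) (a : X)
  : {ffun 'I_n -> X} :=
  [ffun i : 'I_n => if val i == n.-1 then a else x i].

Definition partial_nmetric (R : realType) (X : Type) (n : nat)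
  (P : {ffun 'I_n -> X} -> R) : Prop :=
  [/\ (forall x1 x2 : X, P (cst_tup n x1) <= P (cl_tup n x1 x2)),
      (forall (x : {ffun 'I_n -> X}) (s : 'S_n), P x = P [ffun i => x (s i)]),
      (forall x1 x2 : X,
          (P (cl_tup n x1 x2) = P (cst_tup n x1) /\
           P (cl_tup n x2 x1) = P (cst_tup n x2)) <-> x1 = x2) &
      (forall (x : {ffun 'I_n -> X}) (a : X) (l : 'I_n), val l = n.-1 ->
          P x <= P (setlast x a) + P (cl_tup n a (x l)) - P (cst_tup n a))].

(* Main.v *)
Require Import Defs.
From HB Require Import structures.
From mathcomp Require Import all_boot all_order all_algebra all_fingroup.
From mathcomp Require Import reals.
Import Order.TTheory GRing.Theory Num.Theory.
Local Open Scope ring_scope.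

Lemma key (R : realType) (X : Type) (n : nat)
  (P : {ffun 'I_n -> X} -> R) : partial_nmetric P ->
  forall (z : {ffun 'I_n -> X}) (j : 'I_n) (a : X),
  P z <= P [ffun i => if i == j then a else z i]
         + (P (cl_tup n a (z j)) - P (cst_tup n a)).
Proof.
case=> _ H2 _ H4 z j a.
have ln : (n.-1 < n)%N by case: n j {z P H2 H4} => [[]|].
pose l := Ordinal ln.
pose s := tperm j l.
have -> : P z = P [ffun i => z (s i)] by apply: H2.
have E := H4 [ffun i => z (s i)] a l erefl.
have Hsl : s l = j by rewrite /s tpermR.
rewrite ffunE Hsl in E.
rewrite [P [ffun i => if i == j then a else z i]](H2 _ s).
suff -> : [ffun i => [ffun i0 => if i0 == j then a else z i0] (s i)]
   = setlast [ffun i => z (s i)] a by rewrite addrA.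
apply/ffunP=> i; rewrite !ffunE.
have -> : (s i == j) = (i == l).
  by rewrite -{1}Hsl (inj_eq (@perm_inj _ s)).
by [].
Qed.

Theorem theorem2p9 (R : realType) (X : Type) (n : nat)
  (P : {ffun 'I_n -> X} -> R) :
  (2 <= n)%N -> partial_nmetric P ->
  forall (x y : {ffun 'I_n -> X}) (t : nat), (1 <= t <= n)%N ->
    P x <= P [ffun i : 'I_n => if (val i < t)%N then y i else x i]
           + \sum_(j < n | (val j < t)%N)
               (P (cl_tup n (y j) (x j)) - P (cst_tup n (y j))).
Proof.
move=> _ HP x y t _.
elim: t => [|t IH].
  rewrite big_pred0 ?addr0; last by [].
  by rewrite le_eqVlt; apply/orP; left; apply/eqP; congr P; apply/ffunP=> i; rewrite ffunE.
case: (ltnP t n) => Htn; last first.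
  have -> : [ffun i : 'I_n => if (val i < t.+1)%N then y i else x i]
         = [ffun i : 'I_n => if (val i < t)%N then y i else x i].
    by apply/ffunP=> i; have Hi := leq_trans (ltn_ord i) Htn; rewrite !ffunE Hi ltnS (ltnW Hi).
  rewrite (eq_bigl (fun j : 'I_n => (val j < t)%N)) //.
  by move=> i; have Hi := leq_trans (ltn_ord i) Htn; rewrite Hi ltnS (ltnW Hi).
pose jt := Ordinal Htn.
rewrite (bigD1 jt) //=.
rewrite (eq_bigl (fun j : 'I_n => (val j < t)%N)); last first.
  move=> i; rewrite ltnS; apply/andP/idP.
    by case=> H1 H2; rewrite ltn_neqAle H1 andbT; rewrite -val_eqE /= in H2.
  by move=> H; split; [exact: ltnW | rewrite -val_eqE /= neq_ltn H].
apply: (le_trans IH).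
rewrite addrA lerD2r.
have K := @key R X n P HP [ffun i : 'I_n => if (val i < t)%N then y i else x i] jt (y jt).
rewrite ffunE ltnn in K.
suff <- : [ffun i => if i == jt then y jt
                   else [ffun i0 : 'I_n => if (val i0 < t)%N then y i0 else x i0] i]
   = [ffun i : 'I_n => if (val i < t.+1)%N then y i else x i] by [].
apply/ffunP=> i; rewrite !ffunE ltnS -val_eqE /=.
case: (ltngtP (val i) t) => H //=.
by have -> : i = jt by apply: val_inj.
Qed.
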